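(* Let $\mu$ be a distribution over $\{0,1\}^V$ and $\theta\in(0,1)$. Let $\pi^{(t)}_{\mathrm{GD}}$ be the law at time $t$ of the Glauber dynamics on $\pi$ started from $\mathsf{lift}(\mathbf 1_V)$, i.e. $\pi^{(0)}_{\mathrm{GD}}$ is the law of $\mathsf{lift}(\mathbf 1_V)$ and $\pi^{(t)}_{\mathrm{GD}}=\pi^{(t-1)}_{\mathrm{GD}}P_{\pi\text{-GD}}$. Then for every $t\ge0$, $\pi^{(t)}_{\mathrm{GD}}P_{\mathrm{cl}}=\pi^{(t)}_{\mathrm{GD}}$.
   Context: $\mathsf{lift}$: random map $\{0,1\}^V\to\{0,1,\star\}^V$, independently per coordinate $0\mapsto0$, $1\mapsto\star$ w.p. $1-\theta$, $1\mapsto1$ w.p. $\theta$. $\mathsf{contr}:\{0,1,\star\}^V\to\{0,1\}^V$: $0\mapsto0$, $1,\star\mapsto1$ coordinatewise. $\pi$ is the law of $\mathsf{lift}(X)$ for $X\sim\mu$, with support $\Omega(\pi)$. $P_{\pi\text{-GD}}$ is the Glauber dynamics on $\pi$: pick $v$ uniformly, resample $X_v$ from $\pi$ conditioned on $X_{V\setminus\{v\}}$. $P_{\mathrm{cl}}$ is the Markov chain sending $X$ to the random configuration $\mathsf{lift}(\mathsf{contr}(X))$. Distributions are row vectors acting on transition matrices from the left. *)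

(* Defs.v *)
From HB Require Import structures.
From mathcomp Require Import all_boot all_order all_algebra.
Set Implicit Arguments. Unset Strict Implicit. Unset Printing Implicit Defensive.
Import Order.TTheory GRing.Theory Num.Theory.
Local Open Scope ring_scope.

(* Spins {0,1,star} encoded as option bool:
   Some false = 0, Some true = 1, None = star. *)
Definition spin := option bool.
Notation s0 := (Some false : spin).
Notation s1 := (Some true : spin).
Notation sstar := (None : spin).

Section Defs.
Variables (R : realFieldType) (V : finType).

Definition cfg01 := {ffun V -> bool}.
Definition cfg3 := {ffun V -> spin}.

Definition step (S : finType) (nu : S -> R) (P : S -> S -> R) : S -> R :=
  fun y => \sum_(x : S) nu x * P x y.

Definition lift1 (theta : R) (b : bool) (s : spin) : R :=
  if b then (if s == s1 then theta else if s == sstar then 1 - theta else 0)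
  else (if s == s0 then 1 else 0).

Definition liftK (theta : R) (x : cfg01) (y : cfg3) : R :=
  \prod_(v : V) lift1 theta (x v) (y v).

Definition contr (y : cfg3) : cfg01 := [ffun v => y v != s0].

Definition pi_lift (mu : cfg01 -> R) (theta : R) (y : cfg3) : R :=
  \sum_(x : cfg01) mu x * liftK theta x y.

Definition agree_off (v : V) (x y : cfg3) : bool :=
  [forall u : V, (u != v) ==> (y u == x u)].

(* Convention: if the conditioning event has p-mass 0, the chain stays put. *)
Definition glauber (p : cfg3 -> R) (x y : cfg3) : R :=
  #|V|%:R^-1 * \sum_(v : V)
    (if agree_off v x y then
       (let Z := \sum_(z : cfg3 | agree_off v x z) p z in
        if Z != 0 then p y / Z else (y == x)%:R)
     else 0).

Definition Pcl (theta : R) (x y : cfg3) : R := liftK theta (contr x) y.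

Definition ones : cfg01 := [ffun _ => true].

Definition piGD (mu : cfg01 -> R) (theta : R) (t : nat) : cfg3 -> R :=
  iter t (fun nu => step nu (glauber (pi_lift mu theta))) (liftK theta ones).

End Defs.

(* Main.v *)
Require Import Defs.
From HB Require Import structures.
From mathcomp Require Import all_boot all_order all_algebra.
From mathcomp Require Import ring.
From Stdlib Require Import FunctionalExtensionality.
Set Implicit Arguments. Unset Strict Implicit. Unset Printing Implicit Defensive.
Import Order.TTheory GRing.Theory Num.Theory.
Local Open Scope ring_scope.

Section Aux.
Variables (R : realFieldType) (V : finType) (theta : R).

Definition ell (s : spin) : R := lift1 theta (s != s0) s.
Definition Lam (y : cfg3 V) : R := \prod_(u : V) ell (y u).

Lemma sum_spin (F : spin -> R) : \sum_(s : spin) F s = F sstar + F s1 + F s0.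
Proof.
rewrite (bigD1 sstar) // (bigD1 s1) // (bigD1 s0) //= big1 ?addr0 ?addrA //.
by case=> [[]|].
Qed.

Lemma lift1E b s : lift1 theta b s = ((s != s0) == b)%:R * ell s.
Proof. by case: b; case: s => [[]|] /=; rewrite /ell /= ?mul1r ?mul0r. Qed.

Lemma liftKE (b : cfg01 V) y : Defs.liftK theta b y = (contr y == b)%:R * Lam y.
Proof.
rewrite /Defs.liftK /Lam.
under eq_bigr do rewrite lift1E.
rewrite big_split /=; congr (_ * _).
case: eqP => [<-|/eqP ne].
  by rewrite big1 // => u _; rewrite ffunE eqxx.
have [u hu] : exists u, (y u != s0) != b u.
  apply/existsP; apply: contraR ne; rewrite negb_exists => /forallP H.
  by apply/eqP/ffunP => u; rewrite ffunE; move: (H u); rewrite negbK => /eqP.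
by rewrite (bigD1 u) //= (negbTE hu) mul0r.
Qed.

Lemma sum_liftK (b : cfg01 V) : \sum_(x : cfg3 V) Defs.liftK theta b x = 1.
Proof.
rewrite /Defs.liftK -(bigA_distr_bigA (fun i j => lift1 theta (b i) j)) /=.
apply: big1 => u _; rewrite sum_spin; case: (b u) => /=.
  by rewrite /lift1 /= addr0 subrK.
by rewrite /lift1 /= !add0r.
Qed.


Definition upd (y : cfg3 V) (v : V) (s : spin) : cfg3 V :=
  [ffun u => if u == v then s else y u].
Definition updb (b : cfg01 V) (v : V) (c : bool) : cfg01 V :=
  [ffun u => if u == v then c else b u].
Definition wof (y : cfg3 V) (v : V) : R := \prod_(u | u != v) ell (y u).

Lemma agree_sym (v : V) (x y : cfg3 V) : agree_off v x y = agree_off v y x.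
Proof.
apply/forallP/forallP => H u; move: (H u); case: (u != v) => //= /eqP ->; by [].
Qed.

Lemma eq_upd (x y : cfg3 V) (v : V) s : (x == upd y v s) = agree_off v y x && (x v == s).
Proof.
apply/eqP/andP.
  move=> ->; rewrite ffunE eqxx; split => //.
  by apply/forallP => u; apply/implyP => /negbTE h; rewrite ffunE h.
case=> /forallP H /eqP hv; apply/ffunP => u; rewrite ffunE.
case: eqP => [->|/eqP ne] //.
by move: (H u); rewrite ne /= => /eqP.
Qed.

Lemma sum_agree (F : cfg3 V -> R) y v :
  \sum_(x | agree_off v y x) F x = \sum_(s : spin) F (upd y v s).
Proof.
transitivity (\sum_(s : spin) \sum_(x | x == upd y v s) F x); last first.
  by apply: eq_bigr => s _; rewrite big_pred1_eq.
rewrite (exchange_big_dep predT) //=.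
rewrite big_mkcond /=; apply: eq_bigr => x _.
case: ifP => H.
  rewrite (eq_bigl (fun s => s == x v)) ?big_pred1_eq //.
  by move=> s; rewrite eq_upd H /= eq_sym.
by rewrite big_pred0 // => s; rewrite eq_upd H.
Qed.

Lemma agree_upd (v : V) (y : cfg3 V) s (z : cfg3 V) : agree_off v (upd y v s) z = agree_off v y z.
Proof.
apply: eq_forallb => u; case: (boolP (u != v)) => //= /negbTE h.
by rewrite ffunE h.
Qed.

Lemma Lam_split (y : cfg3 V) v : Lam y = ell (y v) * wof y v.
Proof. by rewrite /Lam (bigD1 v). Qed.

Lemma Lam_upd (y : cfg3 V) v s : Lam (upd y v s) = ell s * wof y v.
Proof.
rewrite (Lam_split _ v) ffunE eqxx; congr (_ * _).
by apply: eq_bigr => u /negbTE h; rewrite ffunE h.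
Qed.

Lemma contr_upd (y : cfg3 V) v s : contr (upd y v s) = updb (contr y) v (s != s0).
Proof.
apply/ffunP => u; rewrite !ffunE; by case: (u == v).
Qed.

Lemma upd_id (y : cfg3 V) v : upd y v (y v) = y.
Proof. by apply/ffunP => u; rewrite ffunE; case: eqP => // ->. Qed.

Lemma sum_fiber (G : cfg01 V -> R) y v :
  \sum_(s : spin) G (contr (upd y v s)) * Lam (upd y v s) =
  (G (updb (contr y) v false) + G (updb (contr y) v true)) * wof y v.
Proof.
rewrite sum_spin !contr_upd !Lam_upd /ell /lift1 /=.
ring.
Qed.


Lemma piE (mu : cfg01 V -> R) y : pi_lift mu theta y = mu (contr y) * Lam y.
Proof.
rewrite /pi_lift (bigD1 (contr y)) //= big1 ?addr0.
  by rewrite liftKE eqxx mul1r.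
by move=> x /negbTE h; rewrite liftKE eq_sym h mul0r mulr0.
Qed.

Definition isForm (nu : cfg3 V -> R) :=
  exists g : cfg01 V -> R, forall y, nu y = g (contr y) * Lam y.

Lemma Form_Pcl nu : isForm nu -> step nu (Pcl theta) = nu.
Proof.
move=> [g Hg]; apply: functional_extensionality => y.
rewrite /step /Pcl Hg.
transitivity (\sum_x g (contr y) * Lam y * Defs.liftK theta (contr y) x).
  apply: eq_bigr => x _; rewrite Hg !liftKE.
  have [->|h] := eqVneq (contr y) (contr x).
    by simpl; ring.
  by simpl; ring.
by rewrite -mulr_sumr sum_liftK mulr1.
Qed.

End Aux.

Lemma Form_glauber (R : realFieldType) (V : finType) (theta : R)
  (mu : cfg01 V -> R) (nu : cfg3 V -> R) :
  isForm theta nu -> isForm theta (step nu (glauber (pi_lift mu theta))).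
Proof.
move=> [g Hg].
pose gv (v : V) (b : cfg01 V) :=
  let M := mu (updb b v false) + mu (updb b v true) in
  if M != 0 then mu b * (g (updb b v false) + g (updb b v true)) / M else g b.
exists (fun b => #|V|%:R^-1 * \sum_v gv v b) => y.
rewrite /step /glauber.
under eq_bigr do rewrite mulrCA.
rewrite -mulr_sumr -mulrA; congr (_ * _).
under eq_bigr do rewrite mulr_sumr.
rewrite exchange_big /= mulr_suml; apply: eq_bigr => v _.
under eq_bigr do rewrite (fun_if (fun t => nu _ * t)) mulr0.
rewrite -big_mkcond /=.
rewrite (eq_bigl (fun x => agree_off v y x)); last by move=> x; rewrite agree_sym.
rewrite sum_agree.
set b := contr y.
set M := mu (updb b v false) + mu (updb b v true).
set w := wof theta y v.
have HZ : forall s, \sum_(z | agree_off v (upd y v s) z) pi_lift mu theta z = M * w.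
  move=> s; rewrite (eq_bigl (fun z => agree_off v y z)); last by move=> z; rewrite agree_upd.
  rewrite sum_agree; under eq_bigr do rewrite piE.
  by rewrite sum_fiber.
under eq_bigr do rewrite HZ.
have Hnu : \sum_s nu (upd y v s) = (g (updb b v false) + g (updb b v true)) * w.
  under eq_bigr do rewrite Hg.
  by rewrite sum_fiber.
have [Z0|Znz] := eqVneq (M * w) 0; last first.
  rewrite -mulr_suml Hnu piE /gv /=.
  have [M0|Mnz] := eqVneq M 0; first by rewrite M0 mul0r eqxx in Znz.
  rewrite /= -/M -/b.
  have wnz : w != 0 by apply: contraNneq Znz => ->; rewrite mulr0.
  by field; rewrite Mnz wnz.
rewrite /=.
under eq_bigr do rewrite eq_upd.
rewrite (bigD1 (y v)) //= big1 ?addr0; last first.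
  by move=> s /negbTE h; rewrite eq_sym h andbF mulr0.
have -> : agree_off v y y by apply/forallP => u; apply/implyP.
rewrite eqxx mulr1 upd_id Hg /gv /=.
case: ifP => // Mnz.
have w0 : w = 0 by move: Z0 => /eqP; rewrite mulf_eq0 (negbTE (idP Mnz)) => /eqP.
by rewrite (Lam_split _ _ v) -/w w0 !mulr0.
Qed.



Unset Implicit Arguments.
Set Strict Implicit.

Theorem lemma3p4 (R : realFieldType) (V : finType)
  (mu : cfg01 V -> R)
  (mu_ge0 : forall x, 0 <= mu x) (mu_sum1 : \sum_(x : cfg01 V) mu x = 1)
  (theta : R) (theta_gt0 : 0 < theta) (theta_lt1 : theta < 1) (t : nat) :
  step (piGD mu theta t) (Pcl theta) = piGD mu theta t.
Proof.
apply: Form_Pcl.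
elim: t => [|t IH].
  exists (fun b => (b == ones V)%:R) => y.
  by rewrite /piGD /= liftKE.
exact: Form_glauber.
Qed.
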